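(* Let $r\ge2$ be an even integer, let $Q_0<Q_1<\dots<Q_n<Q_{n+1}$ and $P_1,\dots,P_n\in\mathbb R$. Then there is a unique $(\hat u_0,\dots,\hat u_{n+1})\in\mathbb R^{n+2}$ with $\hat u_0=\hat u_{n+1}=0$ satisfying, for $i=1,\dots,n$, $$P_i=-\left|\frac{\hat u_{i+1}-\hat u_i}{Q_{i+1}-Q_i}\right|^{r-2}\frac{\hat u_{i+1}-\hat u_i}{Q_{i+1}-Q_i}+\left|\frac{\hat u_i-\hat u_{i-1}}{Q_i-Q_{i-1}}\right|^{r-2}\frac{\hat u_i-\hat u_{i-1}}{Q_i-Q_{i-1}}.$$ *)

(* Defs.v *)
From mathcomp Require Import all_boot all_order all_algebra.
From mathcomp Require Import reals.
Set Implicit Arguments. Unset Strict Implicit. Unset Printing Implicit Defensive.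
Import Order.TTheory GRing.Theory Num.Theory.
Local Open Scope ring_scope.

Definition rphi (R : realType) (r : nat) (x : R) : R := `|x| ^+ (r - 2) * x.

Definition solves (R : realType) (r n : nat) (Q P u : nat -> R) : Prop :=
  u 0%N = 0 /\ u n.+1 = 0 /\
  forall i : nat, (1 <= i <= n)%N ->
    P i = - rphi r ((u i.+1 - u i) / (Q i.+1 - Q i))
          + rphi r ((u i - u i.-1) / (Q i - Q i.-1)).

(* Main.v *)
Require Import Defs.
From mathcomp Require Import all_boot all_order all_algebra.
From mathcomp Require Import reals.
From mathcomp Require Import classical_sets boolp topology normedtype realfun.
From mathcomp Require Import ring lra.
Import Order.TTheory GRing.Theory Num.Theory.
Import numFieldNormedType.Exports.
Local Open Scope ring_scope.

Section Phi.
Variables (R : realType) (r : nat).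
Local Notation phi := (@rphi R r).

Lemma phiN x : phi (- x) = - phi x.
Proof. by rewrite /rphi normrN mulrN. Qed.

Lemma phi_ge0 x : 0 <= x -> phi x = x ^+ (r - 2).+1.
Proof. by move=> x0; rewrite /rphi ger0_norm // exprSr. Qed.

Lemma phi_lt0 x y : 0 <= x -> x < y -> phi x < phi y.
Proof.
move=> x0 xy; have y0 : 0 <= y := ltW (le_lt_trans x0 xy).
by rewrite (phi_ge0 _ x0) (phi_ge0 _ y0) (ltrXn2r _ x0 xy).
Qed.

Lemma phi_lt x y : x < y -> phi x < phi y.
Proof.
move=> xy; have [x0|x0] := leP 0 x; first exact: phi_lt0.
have [y0|y0] := leP y 0.
  have h : phi (- y) < phi (- x).
    by apply: phi_lt0; [rewrite oppr_ge0 | rewrite ltrN2].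
  by move: h; rewrite (phiN y) (phiN x) ltrN2.
have h1 : phi x < 0.
  rewrite /rphi pmulr_rlt0 //.
  by apply: exprn_gt0; rewrite normr_gt0 ltr0_neq0.
have h2 : 0 < phi y.
  rewrite /rphi pmulr_rgt0 //.
  by apply: exprn_gt0; rewrite normr_gt0 gt_eqF.
exact: lt_trans h1 h2.
Qed.

Lemma phi_le x y : (phi x <= phi y) = (x <= y).
Proof.
apply/idP/idP => h.
  by rewrite leNgt; apply/negP => /phi_lt; rewrite ltNge h.
by rewrite le_eqVlt in h; case/orP: h => [/eqP->//|/phi_lt/ltW].
Qed.

Lemma phi_inj : injective phi.
Proof. by move=> x y e; apply/eqP; rewrite eq_le -(phi_le x y) -(phi_le y x) e lexx. Qed.

Lemma phi_cont : continuous (fun x : R => phi x).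
Proof.
move=> x.
have h1 : {for x, continuous (fun z : R => `|z| ^+ (r - 2))}.
  exact: (@continuous_comp _ _ _ (@Num.Def.normr R R) (fun z : R => z ^+ (r-2)) x
     (@norm_continuous R R x) (@exprn_continuous R (r-2) `|x|)).
have h2 : {for x, continuous (fun z : R => z)} by exact: cvg_id.
exact: (continuousM h1 h2).
Qed.

Lemma phi_surj y : exists x, phi x = y.
Proof.
set b := `|y| + 1.
have b1 : 1 <= b by rewrite lerDr.
have b0 : 0 <= b := le_trans ler01 b1.
have hb0 : `|y| < phi b.
  rewrite (phi_ge0 _ b0) exprSr.
  apply: (@lt_le_trans _ _ b); first by rewrite /b ltrDl.
  by rewrite ler_pMl ?(lt_le_trans ltr01 b1) // exprn_ege1.
have hb : y < phi b := le_lt_trans (ler_norm y) hb0.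
have ha : phi (- b) < y.
  rewrite phiN ltrNl; apply: le_lt_trans hb0.
  by rewrite -normrN ler_norm.
have hab : phi (- b) <= phi b by rewrite ltW // (lt_trans ha).
have hle : - b <= b by rewrite lerNl (le_trans _ b0) // oppr_le0.
have hmm : Num.min (phi (- b)) (phi b) <= y <= Num.max (phi (- b)) (phi b).
  by rewrite (min_l hab) (max_r hab) !ltW.
have [c _ hc] := IVT hle (continuous_subspaceT phi_cont) hmm.
by exists c.
Qed.

Definition ginv (y : R) : R := proj1_sig (cid (phi_surj y)).

Lemma ginvK y : phi (ginv y) = y.
Proof. exact: (proj2_sig (cid (phi_surj y))). Qed.

Lemma phiK x : ginv (phi x) = x.
Proof. by apply: phi_inj; rewrite ginvK. Qed.

Lemma ginv_le x y : (ginv x <= ginv y) = (x <= y).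
Proof. by rewrite -phi_le !ginvK. Qed.

Lemma ginv0 : ginv 0 = 0.
Proof. by apply: phi_inj; rewrite ginvK /rphi mulr0. Qed.

Lemma ginv_cont : continuous ginv.
Proof.
move=> y.
have c1 : {near ginv y, cancel phi ginv}.
  by apply: filterE => z; exact: phiK.
have c2 : {near ginv y, continuous phi}.
  by apply: filterE => z; exact: phi_cont.
have h := near_can_continuous c1 c2.
rewrite ginvK in h; exact: (nbhs_singleton h).
Qed.

End Phi.

Lemma mono_prod (R : realType) (r : nat) (x y : R) :
  0 <= (x - y) * (rphi r x - rphi r y).
Proof.
have [h|h] := leP x y.
  by apply: mulr_le0; rewrite subr_le0 ?phi_le.
by apply: mulr_ge0; rewrite subr_ge0 ltW ?phi_lt.
Qed.

Lemma sum_cont (R : realType) (m : nat) (f : nat -> R -> R) :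
  (forall i, continuous (f i)) -> continuous (fun c => \sum_(i < m) f i c).
Proof.
move=> hf; elim: m => [|m IH].
  have -> : (fun c => \sum_(i < 0) f i c) = (fun _ => 0).
    by apply: funext => c; rewrite big_ord0.
  by move=> x; exact: cst_continuous.
have -> : (fun c => \sum_(i < m.+1) f i c) =
          (fun c => \sum_(i < m) f i c + f m c).
  by apply: funext => c; rewrite big_ord_recr.
by move=> x; apply: continuousD; [exact: IH | exact: hf].
Qed.

Lemma uniq_sol (R : realType) (r n : nat) (Q P v w : nat -> R) :
  (forall i : nat, (i <= n)%N -> Q i < Q i.+1) ->
  solves r n Q P v -> solves r n Q P w ->
  forall i : nat, (i <= n.+1)%N -> v i = w i.
Proof.
move=> hQ [v0 [vn hv]] [w0 [wn hw]].
pose h i := Q i.+1 - Q i.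
have hp : forall i, (i <= n)%N -> 0 < h i by move=> i hi; rewrite subr_gt0 hQ.
pose a i := (v i.+1 - v i) / h i.
pose b i := (w i.+1 - w i) / h i.
have va : forall i, (i <= n)%N -> v i.+1 - v i = h i * a i.
  by move=> i hi; rewrite /a mulrC divfK // gt_eqF // hp.
have wb : forall i, (i <= n)%N -> w i.+1 - w i = h i * b i.
  by move=> i hi; rewrite /b mulrC divfK // gt_eqF // hp.
have sa : \sum_(i < n.+1) h i * a i = 0.
  rewrite -(big_mkord xpredT (fun i => h i * a i)).
  rewrite (telescope_sumr_eq v) //; first by rewrite vn v0 subr0.
  by move=> k /andP[_ hk]; rewrite va.
have sb : \sum_(i < n.+1) h i * b i = 0.
  rewrite -(big_mkord xpredT (fun i => h i * b i)).
  rewrite (telescope_sumr_eq w) //; first by rewrite wn w0 subr0.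
  by move=> k /andP[_ hk]; rewrite wb.
pose d := rphi r (a 0%N) - rphi r (b 0%N).
have hd : forall i, (i <= n)%N -> rphi r (a i) - rphi r (b i) = d.
  elim => [//|i IH] hi.
  have ea : P i.+1 = - rphi r (a i.+1) + rphi r (a i) by apply: hv.
  have eb : P i.+1 = - rphi r (b i.+1) + rphi r (b i) by apply: hw.
  have := IH (ltnW hi); lra.
have ht : \sum_(i < n.+1) (h i * ((a i - b i) * (rphi r (a i) - rphi r (b i)))) = 0.
  rewrite (eq_bigr (fun i : 'I_n.+1 => (h i * a i - h i * b i) * d)); last first.
    by move=> i _; rewrite (hd i (ltn_ord i)); ring.
  by rewrite -big_distrl /= sumrB sa sb subrr mul0r.
have hnn : forall i : 'I_n.+1, xpredT i ->
    0 <= h i * ((a i - b i) * (rphi r (a i) - rphi r (b i))).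
  move=> i _; apply: mulr_ge0; last exact: mono_prod.
  exact: (ltW (hp _ (ltn_ord i))).
have hab : forall i, (i <= n)%N -> a i = b i.
  move=> i hi.
  have := psumr_eq0P hnn ht (i := Ordinal (hi : (i < n.+1)%N)) isT.
  move/eqP; rewrite /= mulf_eq0 (gt_eqF (hp _ hi)) /= mulf_eq0 subr_eq0.
  case/orP => [/eqP //|]; rewrite subr_eq0 => /eqP; exact: phi_inj.
elim => [_|i IH hi]; first by rewrite v0 w0.
have hi' : (i <= n)%N := hi.
have e1 := va i hi'; have e2 := wb i hi'.
rewrite (hab i hi') in e1.
have := IH (ltnW hi); lra.
Qed.

Theorem mainTheorem8 (R : realType) (r n : nat) (Q P : nat -> R) :
  (2 <= r)%N -> ~~ odd r ->
  (forall i : nat, (i <= n)%N -> Q i < Q i.+1) ->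
  exists u : nat -> R, solves r n Q P u /\
    forall v : nat -> R, solves r n Q P v ->
      forall i : nat, (i <= n.+1)%N -> v i = u i.
Proof.
move=> _ _ hQ.
pose h i := Q i.+1 - Q i.
have hp : forall i, (i <= n)%N -> 0 < h i by move=> i hi; rewrite subr_gt0 hQ.
pose S i := \sum_(1 <= k < i.+1) P k.
pose F c := \sum_(i < n.+1) h i * ginv R r (c - S i).
have Fc : continuous F.
  apply: (@sum_cont R n.+1 (fun i c => h i * ginv R r (c - S i))) => i x.
  have c1 : {for x, continuous (fun c : R => h i)} by exact: cst_continuous.
  have c2 : {for x, continuous (fun c : R => c - S i)}.
    by apply: continuousB; [exact: cvg_id | exact: cst_continuous].
  have c3 : {for x, continuous (fun c : R => ginv R r (c - S i))}.
    exact: (continuous_comp c2 (ginv_cont R r (x - S i))).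
  exact: (continuousM c1 c3).
pose M := \sum_(i < n.+1) `|S i|.
have M0 : 0 <= M by apply: sumr_ge0 => i _; exact: normr_ge0.
have hS : forall i : 'I_n.+1, -M <= S i <= M.
  move=> i; rewrite -ler_norml /M (bigD1 i) //= lerDl.
  by apply: sumr_ge0 => j _; exact: normr_ge0.
have Fa : F (- M) <= 0.
  apply: (@le_trans _ _ (\sum_(i < n.+1) (0:R))); last by rewrite big1_eq.
  apply: ler_sum => i _.
  rewrite pmulr_rle0; last exact: (hp _ (ltn_ord i)).
  rewrite -(ginv0 R r) ginv_le.
  by have /andP[l1 l2] := hS i; lra.
have Fb : 0 <= F M.
  apply: (@le_trans _ _ (\sum_(i < n.+1) (0:R))); first by rewrite big1_eq.
  apply: ler_sum => i _.
  rewrite pmulr_rge0; last exact: (hp _ (ltn_ord i)).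
  rewrite -(ginv0 R r) ginv_le.
  by have /andP[l1 l2] := hS i; lra.
have hle : - M <= M by lra.
have hab : F (- M) <= F M := le_trans Fa Fb.
have hmm : Num.min (F (- M)) (F M) <= 0 <= Num.max (F (- M)) (F M).
  by rewrite (min_l hab) (max_r hab) Fa Fb.
have [c _ hc] := IVT hle (continuous_subspaceT Fc) hmm.
pose s i := ginv R r (c - S i).
pose u k := \sum_(i < k) h i * s i.
have du : forall k, (k <= n)%N -> (u k.+1 - u k) / (Q k.+1 - Q k) = s k.
  move=> k hk; rewrite /u big_ord_recr /= addrC addrK.
  by rewrite mulrAC divff ?mul1r // gt_eqF // hp.
have us : solves r n Q P u.
  split; first by rewrite /u big_ord0.
  split; first exact: hc.
  case => [//|j] /andP[_ hj].
  rewrite (du j.+1 hj) [j.+1.-1]/= (du j (ltnW hj)) /s !ginvK.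
  have -> : S j.+1 = S j + P j.+1 by rewrite /S big_nat_recr.
  lra.
exists u; split => // v hv.
exact: uniq_sol hQ hv us.
Qed.
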